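(* Let $(x_n)$ be a bounded sequence in a Banach space $X$ with $c_J(x_n)>0$. Then there is a block sequence $(z_l)$ of $(x_n)$ such that $\|z_l\|\to c_J(x_n)$ as $l\to\infty$ and $$(1-2^{-m})\,c_J(x_n)\sum_{l=m}^\infty|\alpha_l|\le\Big\|\sum_{l=m}^\infty\alpha_l z_l\Big\|\le(1+2^{-m})\,c_J(x_n)\sum_{l=m}^\infty|\alpha_l|$$ for all $m\in\mathbb N$ and all $(\alpha_l)\in\ell^1$.
   Context: For a bounded sequence $(x_n)$ in a Banach space, define $c_m=\inf\{\|\sum_{n\ge m}\alpha_n x_n\|: \sum_{n\ge m}|\alpha_n|=1\}$. This is an increasing sequence in $m$; put $c_J(x_n)=\sup_m c_m$. A sequence $(z_l)$ is a block sequence of $(x_n)$ if there are finite sets $A_l\subset\mathbb N$ with $\max A_l<\min A_{l+1}$ and scalars $(\lambda_k)$ such that, for every $l$, $\sum_{k\in A_l}|\lambda_k|=1$ and $z_l=\sum_{k\in A_l}\lambda_k x_k$. *)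

(* Defs.v *)
From Stdlib Require Import Reals List.
Open Scope R_scope.

Record NormedSpace := {
  carrier :> Type;
  vzero : carrier;
  vadd : carrier -> carrier -> carrier;
  vopp : carrier -> carrier;
  vscal : R -> carrier -> carrier;
  vnorm : carrier -> R;
  vaddA : forall u v w, vadd u (vadd v w) = vadd (vadd u v) w;
  vaddC : forall u v, vadd u v = vadd v u;
  vadd0 : forall u, vadd u vzero = u;
  vaddN : forall u, vadd u (vopp u) = vzero;
  vscalA : forall a b u, vscal a (vscal b u) = vscal (a * b) u;
  vscal1 : forall u, vscal 1 u = u;
  vscalDr : forall a u v, vscal a (vadd u v) = vadd (vscal a u) (vscal a v);
  vscalDl : forall a b u, vscal (a + b) u = vadd (vscal a u) (vscal b u);
  vnorm_eq0 : forall u, vnorm u = 0 -> u = vzero;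
  vnorm_triangle : forall u v, vnorm (vadd u v) <= vnorm u + vnorm v;
  vnorm_scal : forall a u, vnorm (vscal a u) = Rabs a * vnorm u
}.

Arguments vzero {_}.
Arguments vadd {_} _ _.
Arguments vopp {_} _.
Arguments vscal {_} _ _.
Arguments vnorm {_} _.

Definition vsub {X : NormedSpace} (u v : X) : X := vadd u (vopp v).

Definition vcauchy {X : NormedSpace} (u : nat -> X) : Prop :=
  forall eps, 0 < eps -> exists N, forall p q, (N <= p)%nat -> (N <= q)%nat ->
    vnorm (vsub (u p) (u q)) < eps.

Definition vlim {X : NormedSpace} (u : nat -> X) (l : X) : Prop :=
  forall eps, 0 < eps -> exists N, forall n, (N <= n)%nat -> vnorm (vsub (u n) l) < eps.

Record BanachSpace := {
  bspace :> NormedSpace;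
  bcomplete : forall u : nat -> bspace, vcauchy u -> exists l, vlim u l
}.

Fixpoint vpsum {X : NormedSpace} (f : nat -> X) (n : nat) : X :=
  match n with
  | O => vzero
  | S n' => vadd (vpsum f n') (f n')
  end.

Definition has_sum {X : NormedSpace} (f : nat -> X) (s : X) : Prop :=
  vlim (vpsum f) s.

Definition vlsum {X : NormedSpace} (f : nat -> X) (A : list nat) : X :=
  fold_right (fun k acc => vadd (f k) acc) vzero A.

Definition rlsum (f : nat -> R) (A : list nat) : R :=
  fold_right (fun k acc => f k + acc) 0 A.

Definition bounded_seq {X : NormedSpace} (x : nat -> X) : Prop :=
  exists M, forall n, vnorm (x n) <= M.

Definition ell1 (alpha : nat -> R) : Prop :=
  exists L, infinite_sum (fun n => Rabs (alpha n)) L.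

Definition is_inf (E : R -> Prop) (r : R) : Prop :=
  (forall y, E y -> r <= y) /\ (forall b, (forall y, E y -> b <= y) -> b <= r).

(** The set { || sum_{n>=m} alpha_n x_n || : sum_{n>=m} |alpha_n| = 1 }.
    The coefficients are reindexed: alpha k is the coefficient of x (m+k). *)
Definition cm_set {X : NormedSpace} (x : nat -> X) (m : nat) (r : R) : Prop :=
  exists (alpha : nat -> R) (s : X),
    infinite_sum (fun k => Rabs (alpha k)) 1 /\
    has_sum (fun k => vscal (alpha k) (x (m + k)%nat)) s /\
    r = vnorm s.

Definition is_cm {X : NormedSpace} (x : nat -> X) (m : nat) (c : R) : Prop :=
  is_inf (cm_set x m) c.

Definition is_cJ {X : NormedSpace} (x : nat -> X) (c : R) : Prop :=
  is_lub (fun r => exists m, is_cm x m r) c.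

Definition is_block_seq {X : NormedSpace} (x : nat -> X) (z : nat -> X) : Prop :=
  exists (A : nat -> list nat) (lam : nat -> R),
    (forall l, NoDup (A l)) /\
    (forall l i j, In i (A l) -> In j (A (S l)) -> (i < j)%nat) /\
    (forall l, rlsum (fun k => Rabs (lam k)) (A l) = 1) /\
    (forall l, z l = vlsum (fun k => vscal (lam k) (x k)) (A l)).

(* Main.v *)
Require Import Defs.
From Stdlib Require Import Reals List Lia Lra Classical ClassicalEpsilon.
Open Scope R_scope.

Section Alg.
Variable X : NormedSpace.
Implicit Types u v w : X.

Lemma vscal0 u : vscal 0 u = vzero.
Proof. apply vnorm_eq0. rewrite vnorm_scal, Rabs_R0. ring. Qed.

Lemma vnorm0 : vnorm (@vzero X) = 0.
Proof. rewrite <- (vscal0 vzero), vnorm_scal, Rabs_R0. ring. Qed.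

Lemma vscalr0 a : vscal a (@vzero X) = vzero.
Proof. apply vnorm_eq0. rewrite vnorm_scal, vnorm0. ring. Qed.

Lemma vadd0l u : vadd vzero u = u.
Proof. rewrite vaddC. apply vadd0. Qed.

Lemma vopp_scal u : vopp u = vscal (-1) u.
Proof.
  assert (H : vadd u (vscal (-1) u) = vzero).
  { rewrite <- (vscal1 _ u) at 1. rewrite <- vscalDl.
    replace (1 + -1) with 0 by ring. apply vscal0. }
  rewrite <- (vadd0 _ (vscal (-1) u)), <- (vaddN _ u), vaddA.
  rewrite (vaddC _ (vscal (-1) u) u), H, vadd0l. reflexivity.
Qed.

Lemma vnorm_opp u : vnorm (vopp u) = vnorm u.
Proof. rewrite vopp_scal, vnorm_scal. rewrite Rabs_left by lra. ring. Qed.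

Lemma vnorm_ge0 u : 0 <= vnorm u.
Proof.
  pose proof (vnorm_triangle _ u (vopp u)) as H.
  rewrite vaddN, vnorm0, vnorm_opp in H. lra.
Qed.

Lemma vsub_add u l : vadd (vsub u l) l = u.
Proof.
  unfold vsub. rewrite <- vaddA, (vaddC _ (vopp l) l), vaddN. apply vadd0.
Qed.

Lemma vsub_sym u l : vnorm (vsub u l) = vnorm (vsub l u).
Proof.
  unfold vsub. rewrite !vopp_scal.
  replace (vadd u (vscal (-1) l)) with (vscal (-1) (vadd l (vscal (-1) u))).
  - rewrite vnorm_scal, Rabs_left by lra. ring.
  - rewrite vscalDr, vscalA. replace (-1 * -1) with 1 by ring.
    rewrite vscal1, vaddC. reflexivity.
Qed.

Lemma vnorm_rev u l : Rabs (vnorm u - vnorm l) <= vnorm (vsub u l).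
Proof.
  pose proof (vnorm_triangle _ (vsub u l) l) as H1. rewrite vsub_add in H1.
  pose proof (vnorm_triangle _ (vsub l u) u) as H2. rewrite vsub_add in H2.
  rewrite <- vsub_sym in H2.
  unfold Rabs; destruct Rcase_abs; lra.
Qed.

Lemma vswap4 (a b c d : X) : vadd (vadd a b) (vadd c d) = vadd (vadd a c) (vadd b d).
Proof.
  rewrite <- !vaddA. f_equal. rewrite !vaddA. f_equal. apply vaddC.
Qed.

Lemma vpsum_add (f g : nat -> X) n :
  vpsum (fun j => vadd (f j) (g j)) n = vadd (vpsum f n) (vpsum g n).
Proof.
  induction n; simpl. now rewrite vadd0. rewrite IHn. apply vswap4.
Qed.

Lemma vpsum_scal a (f : nat -> X) n :
  vpsum (fun j => vscal a (f j)) n = vscal a (vpsum f n).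
Proof.
  induction n; simpl. now rewrite vscalr0. now rewrite IHn, vscalDr.
Qed.

Lemma vpsum_ext (f g : nat -> X) n : (forall j, (j < n)%nat -> f j = g j) -> vpsum f n = vpsum g n.
Proof.
  induction n; intros H; simpl; auto. rewrite IHn by (intros; apply H; lia).
  now rewrite H by lia.
Qed.

Lemma vlsum_app (f : nat -> X) l1 l2 : vlsum f (l1 ++ l2) = vadd (vlsum f l1) (vlsum f l2).
Proof.
  induction l1; simpl. now rewrite vadd0l. rewrite IHl1. apply vaddA.
Qed.

Lemma vlsum_seq (f : nat -> X) a n : vlsum f (seq a n) = vpsum (fun j => f (a + j)%nat) n.
Proof.
  induction n. reflexivity. rewrite seq_S, vlsum_app, IHn. simpl. now rewrite vadd0.
Qed.

Lemma vlim_norm (u : nat -> X) l : vlim u l -> Un_cv (fun n => vnorm (u n)) (vnorm l).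
Proof.
  intros H eps Heps. destruct (H eps Heps) as [N HN]. exists N. intros n Hn.
  unfold R_dist. eapply Rle_lt_trans. apply vnorm_rev. apply HN. lia.
Qed.

End Alg.

Fixpoint rpsum (f : nat -> R) (n : nat) : R :=
  match n with O => 0 | S n => rpsum f n + f n end.

Lemma rpsum_sum f n : rpsum f (S n) = sum_f_R0 f n.
Proof. induction n; simpl in *. ring. rewrite <- IHn. simpl. ring. Qed.

Lemma rpsum_ext f g n : (forall j, (j < n)%nat -> f j = g j) -> rpsum f n = rpsum g n.
Proof.
  induction n; intros H; simpl; auto. rewrite IHn by (intros; apply H; lia).
  now rewrite H by lia.
Qed.

Lemma rlsum_app f l1 l2 : rlsum f (l1 ++ l2) = rlsum f l1 + rlsum f l2.
Proof. induction l1; simpl. ring. rewrite IHl1. ring. Qed.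

Lemma rlsum_seq f a n : rlsum f (seq a n) = rpsum (fun j => f (a + j)%nat) n.
Proof.
  induction n. reflexivity. rewrite seq_S, rlsum_app, IHn. simpl. ring.
Qed.

Definition psum {X : NormedSpace} (x : nat -> X) (P : list (nat * R)) : X :=
  fold_right (fun p acc => vadd (vscal (snd p) (x (fst p))) acc) vzero P.
Definition pabs (P : list (nat * R)) : R :=
  fold_right (fun p acc => Rabs (snd p) + acc) 0 P.
Definition gco (P : list (nat * R)) (i : nat) : R :=
  fold_right (fun p acc => (if Nat.eqb i (fst p) then snd p else 0) + acc) 0 P.

Lemma pabs_ge0 P : 0 <= pabs P.
Proof. induction P; simpl. lra. pose proof (Rabs_pos (snd a)). lra. Qed.

Lemma gco_notin P i : ~ In i (map fst P) -> gco P i = 0.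
Proof.
  induction P as [|[k c] P IH]; simpl; intros H; auto.
  destruct (Nat.eqb_spec i k). subst; tauto. rewrite IH by tauto. ring.
Qed.

Lemma rpsum_add f g n : rpsum (fun j => f j + g j) n = rpsum f n + rpsum g n.
Proof. induction n; simpl. ring. rewrite IHn. ring. Qed.

Lemma rpsum_mulr f a n : rpsum (fun j => f j * a) n = rpsum f n * a.
Proof. induction n; simpl. ring. rewrite IHn. ring. Qed.

Section S.
Variable X : NormedSpace.
Variable x : nat -> X.

Lemma vpsum_zero (f : nat -> X) K : (forall j, (j < K)%nat -> f j = vzero) -> vpsum f K = vzero.
Proof.
  induction K; intros H; simpl; auto. rewrite IHK by (intros; apply H; lia).
  rewrite H by lia. apply vadd0.
Qed.

Lemma vpsum_delta m k c K : (m <= k < m + K)%nat ->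
  vpsum (fun j => vscal (if Nat.eqb (m + j) k then c else 0) (x (m + j)%nat)) K = vscal c (x k).
Proof.
  induction K; intros H. lia. simpl.
  destruct (Nat.eqb_spec (m + K) k).
  - rewrite vpsum_zero. rewrite vadd0l. now subst.
    intros j Hj. destruct (Nat.eqb_spec (m+j) k). lia. apply vscal0.
  - rewrite IHK by lia. rewrite vscal0. apply vadd0.
Qed.

Lemma rpsum_delta m k c K : (m <= k < m + K)%nat ->
  rpsum (fun j => Rabs (if Nat.eqb (m + j) k then c else 0)) K = Rabs c.
Proof.
  induction K; intros H. lia. simpl.
  destruct (Nat.eqb_spec (m + K) k).
  - rewrite (rpsum_ext _ (fun _ => 0)). clear. induction K; simpl; auto; lra.
    intros j Hj. destruct (Nat.eqb_spec (m+j) k). lia. apply Rabs_R0.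
  - rewrite IHK by lia. rewrite Rabs_R0. ring.
Qed.

Lemma psum_vpsum m K P : (forall p, In p P -> (m <= fst p < m + K)%nat) ->
  vpsum (fun j => vscal (gco P (m + j)) (x (m + j)%nat)) K = psum x P.
Proof.
  induction P as [|[k c] P IH]; intros H; simpl.
  - apply vpsum_zero. intros. apply vscal0.
  - rewrite (vpsum_ext _ _ (fun j => vadd (vscal (if Nat.eqb (m + j) k then c else 0) (x (m + j)%nat))
        (vscal (gco P (m + j)) (x (m + j)%nat)))).
    rewrite vpsum_add, vpsum_delta, IH. reflexivity.
    intros p Hp; apply H; now right.
    apply (H (k, c)); now left.
    intros j _. apply vscalDl.
Qed.

Lemma pabs_rpsum m K P : NoDup (map fst P) -> (forall p, In p P -> (m <= fst p < m + K)%nat) ->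
  rpsum (fun j => Rabs (gco P (m + j))) K = pabs P.
Proof.
  induction P as [|[k c] P IH]; intros Hd H; simpl.
  - rewrite (rpsum_ext _ (fun _ => 0)). clear. induction K; simpl; auto; lra.
    intros; apply Rabs_R0.
  - simpl in Hd. inversion Hd; subst.
    rewrite (rpsum_ext _ (fun j => Rabs (if Nat.eqb (m + j) k then c else 0) + Rabs (gco P (m + j)))).
    rewrite rpsum_add, rpsum_delta, IH; auto.
    intros p Hp; apply H; now right.
    apply (H (k, c)); now left.
    intros j _. destruct (Nat.eqb_spec (m+j) k).
    + subst. rewrite gco_notin by auto. idtac.
      rewrite Rplus_0_r, Rabs_R0; ring. + rewrite Rplus_0_l, Rabs_R0; ring.
Qed.

Lemma bound_ex m (P : list (nat * R)) : (forall p, In p P -> (m <= fst p)%nat) ->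
  exists K, forall p, In p P -> (m <= fst p < m + K)%nat.
Proof.
  induction P as [|[k c] P IH]; intros H.
  - exists O. simpl. tauto.
  - destruct IH as [K HK]. intros p Hp; apply H; now right.
    exists (K + k + 1)%nat. intros p [Hp|Hp].
    + subst. specialize (H (k,c) (or_introl eq_refl)). simpl in *. lia.
    + specialize (HK p Hp). lia.
Qed.

Lemma LB m c P : is_cm x m c -> NoDup (map fst P) -> (forall p, In p P -> (m <= fst p)%nat) ->
  c * pabs P <= vnorm (psum x P).
Proof.
  intros Hc Hd Hm.
  destruct (Req_dec (pabs P) 0) as [H0|H0].
  { rewrite H0, Rmult_0_r. apply vnorm_ge0. }
  assert (Ht : 0 < pabs P) by (pose proof (pabs_ge0 P); lra).
  set (t := pabs P) in *.
  destruct (bound_ex m P Hm) as [K HK].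
  assert (Hin : cm_set x m (vnorm (vscal (/ t) (psum x P)))).
  { exists (fun j => gco P (m + j) / t), (vscal (/ t) (psum x P)). split; [|split]; auto.
    - intros eps Heps. exists K. intros n Hn. rewrite <- rpsum_sum.
      rewrite (rpsum_ext _ (fun j => Rabs (gco P (m + j)) * / t)).
      rewrite rpsum_mulr, pabs_rpsum; auto. unfold R_dist. fold t.
      replace (t * / t - 1) with 0 by (field; lra). rewrite Rabs_R0. lra.
      intros p Hp. specialize (HK p Hp). lia.
      intros j _. unfold Rdiv. rewrite Rabs_mult, (Rabs_right (/ t)). reflexivity.
      left. apply Rinv_0_lt_compat. lra.
    - intros eps Heps. exists K. intros n Hn.
      rewrite (vpsum_ext _ _ (fun j => vscal (/ t) (vscal (gco P (m + j)) (x (m + j)%nat)))).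
      rewrite vpsum_scal, psum_vpsum. unfold vsub. rewrite vaddN, vnorm0. lra.
      intros p Hp. specialize (HK p Hp). lia.
      intros j _. rewrite vscalA. f_equal. unfold Rdiv. ring. }
  destruct Hc as [Hc _]. specialize (Hc _ Hin).
  rewrite vnorm_scal, Rabs_right in Hc.
  2: { left. apply Rinv_0_lt_compat. lra. }
  apply (Rmult_le_compat_l t) in Hc. 2: lra.
  rewrite <- Rmult_assoc, Rinv_r, Rmult_1_l in Hc by lra. lra.
Qed.

End S.

Section S.
Variable X : NormedSpace.
Variable x : nat -> X.

Lemma cm_ex m : exists c, is_cm x m c.
Proof.
  set (E := fun r => cm_set x m (- r)).
  assert (HE : exists r, E r).
  { exists (- vnorm (x m)). unfold E. rewrite Ropp_involutive.
    exists (fun j => gco ((m, 1) :: nil) (m + j)), (x m). split; [|split]; auto.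
    - intros eps Heps. exists O. intros n _. rewrite <- rpsum_sum.
      rewrite pabs_rpsum. simpl. unfold R_dist. rewrite Rabs_R1.
      replace (1 + 0 - 1) with 0 by ring. rewrite Rabs_R0; lra.
      simpl. constructor. simpl; tauto. constructor.
      intros p [Hp|[]]. subst. simpl. lia.
    - intros eps Heps. exists 1%nat. intros n Hn. rewrite psum_vpsum.
      simpl. rewrite vadd0, vscal1. unfold vsub. rewrite vaddN, vnorm0. lra.
      intros p [Hp|[]]. subst. simpl. lia. }
  assert (Hb : bound E).
  { exists 0. intros r Hr. destruct Hr as [a [s [_ [_ Hs]]]].
    pose proof (vnorm_ge0 _ s). lra. }
  destruct (completeness E Hb HE) as [l [Hl1 Hl2]].
  exists (- l). split.
  - intros y Hy. assert (E (- y)) by (unfold E; now rewrite Ropp_involutive).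
    specialize (Hl1 _ H). lra.
  - intros b Hb'. assert (l <= - b).
    { apply Hl2. intros r Hr. specialize (Hb' _ Hr). lra. }
    lra.
Qed.

Lemma E_lemma cJ N eps : is_cJ x cJ -> 0 < cJ -> 0 < eps ->
  exists K beta, rpsum (fun j => Rabs (beta j)) K = 1 /\
    vnorm (vpsum (fun j => vscal (beta j) (x (N + j)%nat)) K) <= cJ + eps.
Proof.
  intros HJ HcJ Heps.
  destruct (cm_ex N) as [c Hc].
  assert (HccJ : c <= cJ) by (apply (proj1 HJ); now exists N).
  assert (Hr : exists r, cm_set x N r /\ r < c + eps / 4).
  { apply NNPP. intros Hn. assert (c + eps / 4 <= c); [|lra].
    apply (proj2 Hc). intros y Hy. apply Rnot_lt_le. intros Hlt. apply Hn. now exists y. }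
  destruct Hr as [r [[alpha [s [Hsum [Hhas Hrs]]]] Hrc]].
  set (d := eps / (2 * (1 + cJ + eps))).
  assert (Hd : 0 < d) by (unfold d; apply Rdiv_lt_0_compat; lra).
  assert (Hd2 : d * (1 + cJ + eps) = eps / 2) by (unfold d; field; lra).
  destruct (Hsum d Hd) as [N1 HN1]. destruct (Hhas d Hd) as [N2 HN2].
  set (n0 := Nat.max N1 N2).
  specialize (HN1 n0 ltac:(lia)). specialize (HN2 (S n0) ltac:(lia)).
  rewrite <- rpsum_sum in HN1. unfold R_dist in HN1.
  set (T := rpsum (fun k => Rabs (alpha k)) (S n0)) in *.
  set (v := vpsum (fun k => vscal (alpha k) (x (N + k)%nat)) (S n0)) in *.
  assert (HT : 1 - d < T) by (unfold Rabs in HN1; destruct Rcase_abs in HN1; lra).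
  assert (Hdl : d < 1 / 2).
  { assert (d * (1 + cJ + eps) < 1/2 * (1 + cJ + eps)); [|nra]. rewrite Hd2. lra. }
  assert (HT0 : 0 < T) by lra.
  exists (S n0), (fun j => alpha j / T). split.
  - rewrite (rpsum_ext _ (fun j => Rabs (alpha j) * / T)). rewrite rpsum_mulr. fold T. field. lra.
    intros j _. unfold Rdiv. rewrite Rabs_mult, (Rabs_right (/ T)). reflexivity.
    left; apply Rinv_0_lt_compat; lra.
  - rewrite (vpsum_ext _ _ (fun j => vscal (/ T) (vscal (alpha j) (x (N + j)%nat)))).
    rewrite vpsum_scal. fold v. rewrite vnorm_scal, Rabs_right.
    2: left; apply Rinv_0_lt_compat; lra.
    assert (Hv : vnorm v <= d + r).
    { pose proof (vnorm_triangle _ (vsub v s) s). rewrite vsub_add in H. lra. }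
    apply (Rmult_le_reg_l T). lra. rewrite <- Rmult_assoc, Rinv_r, Rmult_1_l by lra.
    nra.
    intros j _. rewrite vscalA. f_equal. unfold Rdiv. ring.
Qed.

Lemma BlockEx cJ : is_cJ x cJ -> 0 < cJ -> forall (l N : nat),
  exists st K beta, (N <= st)%nat /\ rpsum (fun j => Rabs (beta j)) K = 1 /\
    vnorm (vpsum (fun j => vscal (beta j) (x (st + j)%nat)) K) <= (1 + / 2 ^ l) * cJ /\
    (forall P, NoDup (map fst P) -> (forall p, In p P -> (st <= fst p)%nat) ->
       (1 - / 2 ^ l) * cJ * pabs P <= vnorm (psum x P)).
Proof.
  intros HJ HcJ l N.
  assert (Hp : 0 < / 2 ^ l) by (apply Rinv_0_lt_compat, pow_lt; lra).
  assert (Hr : exists r, (exists m, is_cm x m r) /\ (1 - / 2 ^ l) * cJ < r).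
  { apply NNPP. intros Hn. assert (cJ <= (1 - / 2 ^ l) * cJ); [|nra].
    apply (proj2 HJ). intros y Hy. apply Rnot_lt_le. intros Hlt. apply Hn. now exists y. }
  destruct Hr as [r [[m Hm] Hrl]].
  destruct (E_lemma cJ (Nat.max N m) (/ 2 ^ l * cJ) HJ HcJ ltac:(nra)) as [K [beta [H1 H2]]].
  exists (Nat.max N m), K, beta. split; [lia|split; [auto|split]].
  - lra.
  - intros P Hd Hin. eapply Rle_trans. 2: apply (LB _ x m r P Hm Hd).
    apply Rmult_le_compat_r. apply pabs_ge0. lra.
    intros p Hpp. specialize (Hin p Hpp). lia.
Qed.

End S.

Definition Trip := (nat * nat * (nat -> R))%type.

Fixpoint Nst (F : nat -> nat -> Trip) (l : nat) : nat :=
  match l with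
  | O => O
  | S l => (fst (fst (F l (Nst F l))) + snd (fst (F l (Nst F l))))%nat
  end.
Definition st F l := fst (fst (F l (Nst F l))).
Definition Kf F l := snd (fst (F l (Nst F l))).
Definition bt F l := snd (F l (Nst F l)).

Fixpoint lamsum F (k n : nat) : R :=
  match n with
  | O => 0
  | S n => lamsum F k n +
      (if andb (Nat.leb (st F n) k) (Nat.ltb k (st F n + Kf F n)) then bt F n (k - st F n)%nat else 0)
  end.
Definition lam F k := lamsum F k (S k).

Section Blk.
Variable F : nat -> nat -> Trip.
Hypothesis Hst : forall l, (Nst F l <= st F l)%nat.
Hypothesis HK : forall l, (1 <= Kf F l)%nat.

Lemma NstS l : Nst F (S l) = (st F l + Kf F l)%nat.
Proof. reflexivity. Qed.

Lemma st_lt i j : (i < j)%nat -> (st F i + Kf F i <= st F j)%nat.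
Proof.
  intros H. induction H.
  - rewrite <- NstS. apply Hst.
  - specialize (Hst (S m)). rewrite NstS in Hst. specialize (HK m). lia.
Qed.

Lemma st_le i j : (i <= j)%nat -> (st F i <= st F j)%nat.
Proof.
  intros H. destruct (Nat.eq_dec i j). subst; lia.
  pose proof (st_lt i j ltac:(lia)). lia.
Qed.

Lemma st_ge l : (l <= st F l)%nat.
Proof.
  induction l. lia. pose proof (st_lt l (S l) ltac:(lia)). specialize (HK l). lia.
Qed.

Lemma lam_block l k : (st F l <= k < st F l + Kf F l)%nat -> lam F k = bt F l (k - st F l)%nat.
Proof.
  intros Hk.
  assert (H : forall n, lamsum F k n = if Nat.ltb l n then bt F l (k - st F l)%nat else 0).
  { induction n; simpl. reflexivity. rewrite IHn.
    destruct (Nat.eq_dec n l).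
    - subst. replace (Nat.leb (st F l) k) with true by (symmetry; apply Nat.leb_le; lia).
      replace (Nat.ltb k (st F l + Kf F l)) with true by (symmetry; apply Nat.ltb_lt; lia).
      replace (Nat.ltb l l) with false by (symmetry; apply Nat.ltb_ge; lia).
      replace (Nat.ltb l (S l)) with true by (symmetry; apply Nat.ltb_lt; lia). simpl. ring.
    - replace (andb (Nat.leb (st F n) k) (Nat.ltb k (st F n + Kf F n))) with false.
      + destruct (Nat.ltb_spec l n); destruct (Nat.ltb_spec l (S n)); try lia; ring.
      + symmetry. destruct (Nat.lt_ge_cases n l).
        * pose proof (st_lt n l H).
          destruct (Nat.leb_spec (st F n) k); destruct (Nat.ltb_spec k (st F n + Kf F n)); simpl; auto; lia.
        * pose proof (st_lt l n ltac:(lia)).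
          destruct (Nat.leb_spec (st F n) k); destruct (Nat.ltb_spec k (st F n + Kf F n)); simpl; auto; lia. }
  unfold lam. rewrite H. pose proof (st_ge l).
  replace (Nat.ltb l (S k)) with true by (symmetry; apply Nat.ltb_lt; lia). reflexivity.
Qed.

End Blk.

Lemma map_fst_pair (g : nat -> R) A : map fst (map (fun k => (k, g k)) A) = A.
Proof. induction A; simpl; congruence. Qed.

Section P.
Variable X : NormedSpace.
Variable x : nat -> X.

Lemma psum_app P Q : psum x (P ++ Q) = vadd (psum x P) (psum x Q).
Proof. induction P; simpl. now rewrite vadd0l. rewrite IHP. apply vaddA. Qed.

Lemma pabs_app P Q : pabs (P ++ Q) = pabs P + pabs Q.
Proof. induction P; simpl. ring. rewrite IHP. ring. Qed.

Lemma psum_map a (f : nat -> R) A :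
  psum x (map (fun k => (k, a * f k)) A) = vscal a (vlsum (fun k => vscal (f k) (x k)) A).
Proof.
  induction A; simpl. now rewrite vscalr0. rewrite IHA, vscalDr, vscalA. reflexivity.
Qed.

Lemma pabs_map a (f : nat -> R) A :
  pabs (map (fun k => (k, a * f k)) A) = Rabs a * rlsum (fun k => Rabs (f k)) A.
Proof. induction A; simpl. ring. rewrite IHA, Rabs_mult. ring. Qed.

Fixpoint PL (A : nat -> list nat) (lm : nat -> R) (a : nat -> R) (m L : nat) : list (nat * R) :=
  match L with
  | O => nil
  | S L => PL A lm a m L ++ map (fun k => (k, a (m + L)%nat * lm k)) (A (m + L)%nat)
  end.

Lemma PL_psum A lm a m L :
  psum x (PL A lm a m L) =
  vpsum (fun k => vscal (a (m + k)%nat) (vlsum (fun i => vscal (lm i) (x i)) (A (m + k)%nat))) L.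
Proof. induction L; simpl. reflexivity. rewrite psum_app, IHL, psum_map. reflexivity. Qed.

Lemma PL_pabs A lm a m L : (forall j, rlsum (fun k => Rabs (lm k)) (A j) = 1) ->
  pabs (PL A lm a m L) = rpsum (fun k => Rabs (a (m + k)%nat)) L.
Proof. intros H. induction L; simpl. reflexivity. rewrite pabs_app, IHL, pabs_map, H. ring. Qed.

Lemma PL_in A lm a m L p : In p (PL A lm a m L) -> exists l, (l < L)%nat /\ In (fst p) (A (m + l)%nat).
Proof.
  induction L; simpl. tauto. intros H. apply in_app_or in H. destruct H as [H|H].
  - destruct (IHL H) as [l [Hl Hi]]. exists l. split; auto; lia.
  - exists L. split. lia. apply in_map_iff in H. destruct H as [k [Hk Hi]]. subst. exact Hi.
Qed.

End P.

Theorem lemma5p2 (X : BanachSpace) (x : nat -> X) (cJ : R) :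
  bounded_seq x -> is_cJ x cJ -> 0 < cJ ->
  exists z : nat -> X,
    is_block_seq x z /\
    Un_cv (fun l => vnorm (z l)) cJ /\
    (forall (alpha : nat -> R), ell1 alpha ->
      forall (m : nat) (S : R) (s : X),
        infinite_sum (fun k => Rabs (alpha (m + k)%nat)) S ->
        has_sum (fun k => vscal (alpha (m + k)%nat) (z (m + k)%nat)) s ->
        (1 - / 2 ^ m) * cJ * S <= vnorm s /\
        vnorm s <= (1 + / 2 ^ m) * cJ * S).
Proof.
  intros _ HJ HcJ.
  set (Q := fun (l N : nat) (t : Trip) =>
    (N <= fst (fst t))%nat /\ rpsum (fun j => Rabs (snd t j)) (snd (fst t)) = 1 /\
    vnorm (vpsum (fun j => vscal (snd t j) (x (fst (fst t) + j)%nat)) (snd (fst t))) <= (1 + / 2 ^ l) * cJ /\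
    (forall P, NoDup (map fst P) -> (forall p, In p P -> (fst (fst t) <= fst p)%nat) ->
       (1 - / 2 ^ l) * cJ * pabs P <= vnorm (psum x P))).
  assert (Hex : forall l N, exists t, Q l N t).
  { intros l N. destruct (BlockEx X x cJ HJ HcJ l N) as [st0 [K [beta H]]].
    exists (st0, K, beta). exact H. }
  set (F := fun l N => proj1_sig (constructive_indefinite_description _ (Hex l N))).
  assert (HF : forall l, Q l (Nst F l) (F l (Nst F l))).
  { intros l. exact (proj2_sig (constructive_indefinite_description _ (Hex l (Nst F l)))). }
  assert (Hst : forall l, (Nst F l <= st F l)%nat) by (intros l; apply (HF l)).
  assert (Hsum1 : forall l, rpsum (fun j => Rabs (bt F l j)) (Kf F l) = 1) by (intros l; apply (HF l)).
  assert (Hup : forall l, vnorm (vpsum (fun j => vscal (bt F l j) (x (st F l + j)%nat)) (Kf F l)) <= (1 + / 2 ^ l) * cJ)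
    by (intros l; apply (HF l)).
  assert (Hlow : forall l P, NoDup (map fst P) -> (forall p, In p P -> (st F l <= fst p)%nat) ->
       (1 - / 2 ^ l) * cJ * pabs P <= vnorm (psum x P)) by (intros l; apply (HF l)).
  assert (HK : forall l, (1 <= Kf F l)%nat).
  { intros l. specialize (Hsum1 l). destruct (Kf F l). simpl in Hsum1. lra. lia. }
  clearbody F. clear HF Hex Q.
  set (A := fun l => seq (st F l) (Kf F l)).
  set (z := fun l => vlsum (fun k => vscal (lam F k) (x k)) (A l)).
  assert (Hlb : forall l k, In k (A l) -> lam F k = bt F l (k - st F l)%nat).
  { intros l k Hk. apply (lam_block F Hst HK l). unfold A in Hk. apply in_seq in Hk. lia. }
  assert (Hrl : forall l, rlsum (fun k => Rabs (lam F k)) (A l) = 1).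
  { intros l. unfold A. rewrite rlsum_seq. rewrite <- (Hsum1 l). apply rpsum_ext.
    intros j Hj. rewrite (Hlb l). f_equal. f_equal. lia. unfold A. apply in_seq. lia. }
  assert (Hzv : forall l, z l = vpsum (fun j => vscal (bt F l j) (x (st F l + j)%nat)) (Kf F l)).
  { intros l. unfold z, A. rewrite vlsum_seq. apply vpsum_ext.
    intros j Hj. rewrite (Hlb l). f_equal. f_equal. lia. unfold A. apply in_seq. lia. }
  assert (Hzup : forall l, vnorm (z l) <= (1 + / 2 ^ l) * cJ) by (intros; rewrite Hzv; apply Hup).
  assert (Hzlow : forall l, (1 - / 2 ^ l) * cJ <= vnorm (z l)).
  { intros l. assert (E1 : z l = psum x (map (fun k => (k, 1 * lam F k)) (A l))).
    { rewrite psum_map, vscal1. reflexivity. }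
    rewrite E1. eapply Rle_trans. 2: apply (Hlow l).
    - rewrite pabs_map, Hrl, Rabs_R1, !Rmult_1_r. apply Rle_refl.
    - rewrite map_fst_pair. apply seq_NoDup.
    - intros p Hp. apply in_map_iff in Hp. destruct Hp as [k [Hk Hi]]. subst. simpl.
      unfold A in Hi. apply in_seq in Hi. lia. }
  exists z. split; [|split].
  - exists A, (lam F). split; [|split; [|split]].
    + intros l. apply seq_NoDup.
    + intros l i j Hi Hj. unfold A in Hi, Hj. apply in_seq in Hi, Hj.
      pose proof (st_lt F Hst HK l (S l) ltac:(lia)). lia.
    + exact Hrl.
    + intros l. reflexivity.
  - intros eps Heps.
    destruct (pow_lt_1_zero (/ 2) ltac:(rewrite Rabs_right; lra) (eps / cJ) ltac:(apply Rdiv_lt_0_compat; lra))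
      as [N HN].
    exists N. intros n Hn. specialize (HN n Hn). rewrite pow_inv, Rabs_right in HN.
    2: left; apply Rinv_0_lt_compat, pow_lt; lra.
    specialize (Hzup n). specialize (Hzlow n). unfold R_dist.
    assert (/ 2 ^ n * cJ < eps).
    { apply (Rmult_lt_compat_r cJ) in HN; auto. unfold Rdiv in HN.
      rewrite Rmult_assoc, Rinv_l, Rmult_1_r in HN by lra. exact HN. }
    unfold Rabs; destruct Rcase_abs; lra.
  - intros alpha _ m S s HS Hs.
    set (g := fun k => vscal (alpha (m + k)%nat) (z (m + k)%nat)) in *.
    set (f := fun k => Rabs (alpha (m + k)%nat)) in *.
    assert (Hps : forall L, vpsum g L = psum x (PL A (lam F) alpha m L)).
    { intros L. rewrite PL_psum. reflexivity. }
    assert (Hpa : forall L, pabs (PL A (lam F) alpha m L) = rpsum f L).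
    { intros L. apply PL_pabs. exact Hrl. }
    assert (Hidx : forall L p, In p (PL A (lam F) alpha m L) ->
        exists l, (l < L)%nat /\ (st F (m + l) <= fst p < st F (m + l) + Kf F (m + l))%nat).
    { intros L p Hp. destruct (PL_in _ x A (lam F) alpha m L p Hp) as [l [Hl Hi]]. exists l. split; auto.
      unfold A in Hi. apply in_seq in Hi. lia. }
    assert (Hnd : forall L, NoDup (map fst (PL A (lam F) alpha m L))).
    { induction L; simpl. constructor. rewrite map_app.
      rewrite (map_fst_pair (fun k => alpha (m + L)%nat * lam F k)).
      apply NoDup_app; auto. unfold A; apply seq_NoDup.
      intros a Ha Hb. apply in_map_iff in Ha. destruct Ha as [p [Hpa' Hp]]. subst a.
      destruct (Hidx L p Hp) as [l [Hl Hi]].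
      unfold A in Hb. apply in_seq in Hb.
      pose proof (st_lt F Hst HK (m + l) (m + L) ltac:(lia)). lia. }
    assert (HL : forall L, (1 - / 2 ^ m) * cJ * rpsum f L <= vnorm (vpsum g L)).
    { intros L. rewrite Hps, <- Hpa. apply Hlow. apply Hnd.
      intros p Hp. destruct (Hidx L p Hp) as [l [Hl Hi]].
      pose proof (st_le F Hst HK m (m + l) ltac:(lia)). lia. }
    assert (Hpow : forall k, (m <= k)%nat -> / 2 ^ k <= / 2 ^ m).
    { intros k Hk. apply Rinv_le_contravar. apply pow_lt; lra. apply Rle_pow; auto; lra. }
    assert (HU : forall L, vnorm (vpsum g L) <= (1 + / 2 ^ m) * cJ * rpsum f L).
    { induction L; simpl. rewrite vnorm0. lra.
      eapply Rle_trans. apply vnorm_triangle. unfold g at 2. rewrite vnorm_scal.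
      specialize (Hzup (m + L)%nat). specialize (Hpow (m + L)%nat ltac:(lia)).
      assert (Rabs (alpha (m + L)%nat) * vnorm (z (m + L)%nat) <= (1 + / 2 ^ m) * cJ * f L).
      { unfold f. rewrite Rmult_comm. apply Rmult_le_compat_r. apply Rabs_pos. nra. }
      lra. }
    assert (Hv : Un_cv (fun n => vnorm (vpsum g (Datatypes.S n))) (vnorm s)).
    { apply (vlim_norm _ (fun n => vpsum g (Datatypes.S n))). intros eps Heps.
      destruct (Hs eps Heps) as [N HN]. exists N. intros n Hn. apply HN. lia. }
    assert (Hc : forall c : R, Un_cv (fun _ => c) c).
    { intros c eps Heps. exists O. intros. unfold R_dist. rewrite Rminus_diag, Rabs_R0. lra. }
    split.
    + apply Rle_cv_lim with (Un := fun n => (1 - / 2 ^ m) * cJ * sum_f_R0 f n) (Vn := fun n => vnorm (vpsum g (Datatypes.S n))).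
      * intros n. rewrite <- rpsum_sum. apply HL.
      * apply CV_mult. apply Hc. exact HS.
      * exact Hv.
    + apply Rle_cv_lim with (Vn := fun n => (1 + / 2 ^ m) * cJ * sum_f_R0 f n) (Un := fun n => vnorm (vpsum g (Datatypes.S n))).
      * intros n. rewrite <- rpsum_sum. apply HU.
      * exact Hv.
      * apply CV_mult. apply Hc. exact HS.
Qed.
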